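(* The Skolem Conjecture holds if and only if the following statement (S') holds: (S') Let $b$ be a nonzero integer and let $\mathbf u=\langle u_n\rangle_{n\in\mathbb Z}$ be a simple rational LRBS taking values in $\mathbb Z[\frac1b]$. Then $\mathbf u$ has no integer zero if and only if there exist an integer $N\ge1$ and primes $p_1,\dots,p_t$ coprime to $b$ with the following property: for every $\ell\in\{0,\dots,N-1\}$ there is an $i$ such that the sequence $\langle u_{Nn+\ell}\rangle_{n\in\mathbb Z}$ has no $p_i$-adic zero.
   Context: A rational linear recurrent bi-sequence (LRBS) is a bi-infinite sequence $\langle u_n\rangle_{n\in\mathbb Z}$ of rationals satisfying $u_{n+d}=a_{d-1}u_{n+d-1}+\dots+a_0u_n$ for all $n\in\mathbb Z$, with rational $a_i$ and $a_0\neq0$. It is simple if the characteristic polynomial of its minimal-order recurrence has no repeated roots. An integer zero is an $n\in\mathbb Z$ with $u_n=0$. For a prime $p$ not dividing $b$ and a sequence $\langle w_n\rangle_{n\in\mathbb Z}$ with values in $\mathbb Z[\frac1b]$, a $p$-adic zero of $\mathbf w$ is an $x\in\mathbb Z_p$ for which there exist integers $n_1,n_2,\dots$ with $v_p(w_{n_r})\ge r$ and $n_r\equiv x \pmod{p^r\mathbb Z_p}$ for all $r\ge1$. Skolem Conjecture: for every nonzero integer $b$ and every simple rational LRBS $\mathbf u$ with values in $\mathbb Z[\frac1b]$, $\mathbf u$ has no integer zero if and only if there is an integer $m\ge2$ with $\gcd(b,m)=1$ such that $u_n\not\equiv0\pmod m$ for all $n\in\mathbb Z$. *)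

(* Defs.v *)
From mathcomp Require Import all_boot all_order all_algebra all_field.
Set Implicit Arguments. Unset Strict Implicit. Unset Printing Implicit Defensive.
Import Order.TTheory GRing.Theory Num.Theory.
Local Open Scope ring_scope.

(* A recurrence u_{n+d} = a_{d-1} u_{n+d-1} + ... + a_0 u_n for all n in Z,
   with d = size a and a_0 <> 0 (which forces d >= 1). *)
Definition is_rec (u : int -> rat) (a : seq rat) : Prop :=
  a`_0 != 0 /\
  forall n : int, u (n + (size a)%:Z) = \sum_(i < size a) a`_i * u (n + (i : nat)%:Z).

Definition LRBS (u : int -> rat) : Prop := exists a, is_rec u a.

Definition charpoly (a : seq rat) : {poly rat} :=
  'X^(size a) - \sum_(i < size a) a`_i *: 'X^i.

Definition no_repeated_roots (P : {poly rat}) : Prop :=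
  forall z : algC, ~ (('X - z%:P) ^+ 2 %| map_poly (@ratr algC) P).

Definition simple_LRBS (u : int -> rat) : Prop :=
  forall a, is_rec u a -> (forall a', is_rec u a' -> (size a <= size a')%N) ->
    no_repeated_roots (charpoly a).

Definition in_Zb (b : int) (x : rat) : Prop :=
  exists (m : int) (k : nat), x = m%:~R / (b%:~R ^+ k).

Definition values_in_Zb (b : int) (u : int -> rat) : Prop :=
  forall n, in_Zb b (u n).

Definition has_integer_zero (u : int -> rat) : Prop := exists n : int, u n = 0.

Definition zero_mod_Zb (b : int) (m : nat) (x : rat) : Prop :=
  exists y, in_Zb b y /\ x = m%:R * y.

Definition vp_ge (p r : nat) (x : rat) : Prop := ((p ^ r)%:Z %| numq x)%Z.

(* A p-adic integer x in Z_p, represented as a compatible sequence of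
   integers c r (c r being a representative of x mod p^r). *)
Definition Zp_seq (p : nat) (c : nat -> int) : Prop :=
  forall r : nat, ((p ^ r)%:Z %| c r.+1 - c r)%Z.

Definition has_padic_zero (p : nat) (w : int -> rat) : Prop :=
  exists c : nat -> int, Zp_seq p c /\
  exists n_ : nat -> int, forall r : nat, (0 < r)%N ->
    vp_ge p r (w (n_ r)) /\ ((p ^ r)%:Z %| n_ r - c r)%Z.

Definition Skolem_Conjecture : Prop :=
  forall (b : int) (u : int -> rat), b != 0 -> LRBS u -> simple_LRBS u ->
    values_in_Zb b u ->
    (~ has_integer_zero u <->
     exists m : nat, (2 <= m)%N /\ coprime `|b|%N m /\
       forall n : int, ~ zero_mod_Zb b m (u n)).

Definition S' : Prop :=
  forall (b : int) (u : int -> rat), b != 0 -> LRBS u -> simple_LRBS u ->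
    values_in_Zb b u ->
    (~ has_integer_zero u <->
     exists (N : nat) (ps : seq nat), (1 <= N)%N /\
       (forall p, p \in ps -> prime p /\ coprime p `|b|%N) /\
       forall l : nat, (l < N)%N ->
         exists2 p, p \in ps &
           ~ has_padic_zero p (fun n : int => u (N%:Z * n + l%:Z))).

(* Main.v *)
Require Import Defs.
From Stdlib Require Import Classical_Prop ClassicalEpsilon.
From mathcomp Require Import all_boot all_order all_algebra all_field.
From mathcomp Require Import zify ring.
Set Implicit Arguments. Unset Strict Implicit. Unset Printing Implicit Defensive.
Import Order.TTheory GRing.Theory Num.Theory.
Local Open Scope ring_scope.

Definition pint (p : nat) (x : rat) :=
  exists (z s : int), ~~ (p %| `|s|)%N /\ x = z%:~R / s%:~R.
Definition Mp (p e : nat) (x : rat) := exists y, pint p y /\ x = (p ^ e)%:R * y.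

Section Basic.
Variable p : nat.
Hypothesis pp : prime p.

Lemma nd_neq0 (s : int) : ~~ (p %| `|s|)%N -> s%:~R != 0 :> rat.
Proof.
move=> h; rewrite intr_eq0; apply/eqP=> s0; move: h; by rewrite s0 dvdn0.
Qed.

Lemma nd_mul (s t : int) : ~~ (p %| `|s|)%N -> ~~ (p %| `|t|)%N -> ~~ (p %| `|(s * t)%R|)%N.
Proof. by move=> hs ht; rewrite abszM Euclid_dvdM // negb_or hs ht. Qed.

Lemma nd1 : ~~ (p %| `|1%R : int|)%N.
Proof. by rewrite /= dvdn1; case: eqP pp => // ->. Qed.

Lemma pint_int (z : int) : pint p z%:~R.
Proof. exists z, 1; split; first exact: nd1. by rewrite divr1. Qed.

Lemma pint_nat (n : nat) : pint p n%:R.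
Proof. have := pint_int n; by rewrite -pmulrn. Qed.

Lemma pintD x y : pint p x -> pint p y -> pint p (x + y).
Proof.
move=> [z1 [s1 [h1 ->]]] [z2 [s2 [h2 ->]]].
exists (z1 * s2 + z2 * s1), (s1 * s2); split; first exact: nd_mul.
have := nd_neq0 h1; have := nd_neq0 h2 => n2 n1.
rewrite !rmorphD !rmorphM /=. by field; apply/andP.
Qed.

Lemma pintM x y : pint p x -> pint p y -> pint p (x * y).
Proof.
move=> [z1 [s1 [h1 ->]]] [z2 [s2 [h2 ->]]].
exists (z1 * z2), (s1 * s2); split; first exact: nd_mul.
have := nd_neq0 h1; have := nd_neq0 h2 => n2 n1.
rewrite !rmorphM /=. by field; apply/andP.
Qed.

Lemma pintN x : pint p x -> pint p (- x).
Proof. move=> h; have := pintM (pint_int (-1)) h; by rewrite mulN1r. Qed.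

Lemma pintB x y : pint p x -> pint p y -> pint p (x - y).
Proof. by move=> hx hy; apply: pintD => //; apply: pintN. Qed.

Lemma pint_sum (I : Type) (r : seq I) (P : pred I) (F : I -> rat) :
  (forall i, P i -> pint p (F i)) -> pint p (\sum_(i <- r | P i) F i).
Proof.
move=> h; apply: (big_ind (pint p)) => //; first exact: (pint_int 0).
exact: pintD.
Qed.

Lemma pint_prod (I : Type) (r : seq I) (P : pred I) (F : I -> rat) :
  (forall i, P i -> pint p (F i)) -> pint p (\prod_(i <- r | P i) F i).
Proof.
move=> h; apply: (big_ind (pint p)) => //; first exact: (pint_int 1).
exact: pintM.
Qed.

Lemma pint_sign k : pint p ((-1) ^+ k).
Proof.
elim: k => [|k ih]; first exact: (pint_int 1).
rewrite exprS; apply: pintM => //; exact: (pint_int (-1)).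
Qed.

Lemma pint_det n (A : 'M[rat]_n) : (forall i j, pint p (A i j)) -> pint p (\det A).
Proof.
move=> h; rewrite /determinant; apply: pint_sum => s _.
apply: pintM; first exact: pint_sign.
by apply: pint_prod => i _; apply: h.
Qed.

Lemma pint_adj n (A : 'M[rat]_n) : (forall i j, pint p (A i j)) ->
  forall i j, pint p (\adj A i j).
Proof.
move=> h i j; rewrite mxE /cofactor; apply: pintM.
  exact: pint_sign.
by apply: pint_det => k l; rewrite !mxE; apply: h.
Qed.

Lemma pint_denq x : pint p x -> ~~ (p %| `|denq x|)%N.
Proof.
move=> [z [s [hs ex]]].
have s0 := nd_neq0 hs.
have e1 : numq x * s = z * denq x.
  apply: (@intr_inj rat); rewrite !rmorphM /= numqE ex.
  have := denq_neq0 x; rewrite -(intr_eq0 rat) => d0.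
  by field.
have hd : (`|denq x| %| `|s|)%N.
  have : (`|denq x| %| `|numq x| * `|s|)%N.
    by rewrite -abszM e1 abszM dvdn_mull.
  by rewrite Gauss_dvdr // coprime_sym coprime_num_den.
apply/negP=> hp; move/negP: hs; apply; exact: dvdn_trans hp hd.
Qed.

Lemma Mp0 e : Mp p e 0.
Proof. exists 0; split; [exact: (pint_int 0)| by rewrite mulr0]. Qed.

Lemma MpD e x y : Mp p e x -> Mp p e y -> Mp p e (x + y).
Proof.
move=> [a [ha ->]] [b [hb ->]]; exists (a + b); split; [exact: pintD | by rewrite mulrDr].
Qed.

Lemma MpN e x : Mp p e x -> Mp p e (- x).
Proof. move=> [a [ha ->]]; exists (- a); split; [exact: pintN | by rewrite mulrN]. Qed.

Lemma MpB e x y : Mp p e x -> Mp p e y -> Mp p e (x - y).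
Proof. by move=> hx hy; apply: MpD => //; apply: MpN. Qed.

Lemma MpM e x y : Mp p e x -> pint p y -> Mp p e (x * y).
Proof. move=> [a [ha ->]] hy; exists (a * y); split; [exact: pintM | by rewrite mulrA]. Qed.

Lemma Mp_sum e (I : Type) (r : seq I) (P : pred I) (F : I -> rat) :
  (forall i, P i -> Mp p e (F i)) -> Mp p e (\sum_(i <- r | P i) F i).
Proof.
move=> h; apply: (big_ind (Mp p e)) => //; first exact: Mp0. exact: MpD.
Qed.

Lemma Mp_le e e' x : (e' <= e)%N -> Mp p e x -> Mp p e' x.
Proof.
move=> le [a [ha ->]]; exists ((p ^ (e - e'))%:R * a); split.
  by apply: pintM => //; apply: pint_nat.
by rewrite mulrA -natrM -expnD subnKC.
Qed.

Lemma Mp_numq e x : Mp p e x -> ((p ^ e)%:Z %| numq x)%Z.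
Proof.
move=> [y [[z [s [hs ey]]] ex]].
have s0 := nd_neq0 hs.
have e1 : numq x * s = (p ^ e)%:Z * z * denq x.
  apply: (@intr_inj rat); rewrite !rmorphM /= numqE ex ey.
  have := denq_neq0 x; rewrite -(intr_eq0 rat) => d0.
  rewrite [((p ^ e)%:Z)%:~R]/= -[X in _ = X * _ * _]pmulrn. by field.
have : ((p ^ e)%:Z %| numq x * s)%Z by rewrite e1 -mulrA dvdz_mulr.
rewrite Gauss_dvdzl // coprimezE /= coprimeXl // prime_coprime //.
Qed.

Lemma numq_Mp e x : pint p x -> ((p ^ e)%:Z %| numq x)%Z -> Mp p e x.
Proof.
move=> hx /dvdzP [q eq]; have hd := pint_denq hx.
exists (q%:~R / (denq x)%:~R); split; first by exists q, (denq x).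
rewrite -[LHS]divq_num_den eq rmorphM /= [RHS]mulrA; congr (_ / _).
by rewrite mulrC; congr (_ * _); rewrite -pmulrn.
Qed.

End Basic.

Section Res.
Variable p : nat.
Hypothesis pp : prime p.

Lemma natz_rat (n : nat) : (n%:Z)%:~R = n%:R :> rat.
Proof. by rewrite -pmulrn. Qed.

Lemma residue E x : pint p x -> exists r : nat, (r < p ^ E)%N /\ Mp p E (x - r%:R).
Proof.
move=> [z [s [hs ->]]].
have s0 := nd_neq0 hs.
have PE0 : (0 < p ^ E)%N by rewrite expn_gt0 prime_gt0.
have cop : coprimez s (p ^ E)%:Z.
  by rewrite coprimezE /= coprime_sym coprimeXl // prime_coprime.
case: (Bezoutz s (p ^ E)%:Z) => u [v huv]; move: huv; rewrite (eqP cop) => huv.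
set r0 := ((z * u) %% (p ^ E)%:Z)%Z.
have pz0 : (p ^ E)%:Z != 0 by rewrite eqz_nat -lt0n.
have r0ge : 0 <= r0 by apply: modz_ge0.
have r0lt : r0 < (p ^ E)%:Z by apply: ltz_pmod; rewrite ltz_nat.
have hd := divz_eq (z * u) (p ^ E)%:Z; rewrite -/r0 in hd.
set q := ((z * u) %/ (p ^ E)%:Z)%Z in hd.
exists `|r0|%N; split.
  by rewrite -ltz_nat gez0_abs.
exists (z%:~R * v%:~R / s%:~R + q%:~R); split.
  apply: (pintD pp); last exact: (pint_int pp q).
  exists (z * v), s; split => //; by rewrite rmorphM.
have huvR : u%:~R * s%:~R + v%:~R * (p ^ E)%:R = 1 :> rat.
  by rewrite -natz_rat -!rmorphM -rmorphD /= huv.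
have hdR : z%:~R * u%:~R = q%:~R * (p ^ E)%:R + r0%:~R :> rat.
  by rewrite -natz_rat -!rmorphM -rmorphD /= -hd.
have e1 : (`|r0|%N)%:R = r0%:~R :> rat by rewrite -natz_rat gez0_abs.
rewrite e1.
have e2 : r0%:~R = z%:~R * u%:~R - q%:~R * (p ^ E)%:R :> rat.
  by rewrite hdR addrC addKr.
rewrite e2.
have e3 : z%:~R / s%:~R = z%:~R * (u%:~R * s%:~R + v%:~R * (p ^ E)%:R) / s%:~R :> rat.
  by rewrite huvR mulr1.
rewrite e3; by field.
Qed.

Lemma Mp_cancel D : pint p D -> D != 0 ->
  exists k, forall e y, Mp p (e + k)%N (D * y) -> Mp p e y.
Proof.
move=> [z [s [hs eD]]] D0.
have s0 := nd_neq0 hs.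
have z0 : z != 0 by apply: contraNneq D0 => zz; rewrite eD zz mul0r.
have az : (0 < `|z|)%N by rewrite absz_gt0.
case: (pfactor_coprime pp az) => m cpm em.
set k := logn p `|z| in em.
exists k => e y [t [ht ey]].
have m0 : (m != 0)%N by apply: contraTneq cpm => ->; rewrite /coprime gcdn0; case: eqP pp => // ->.
have ez : z%:~R = (-1) ^+ (z < 0)%R * m%:R * (p ^ k)%:R :> rat.
  transitivity (((-1) ^+ (z < 0)%R * (`|z|%N)%:Z)%:~R : rat); first by rewrite -intEsign.
  by rewrite rmorphM /= em rmorph_sign -pmulrn natrM mulrA.
exists (t * (s%:~R / ((-1) ^+ (z < 0)%R * m%:Z)%:~R)); split.
  apply: (pintM pp) => //; exists s, ((-1) ^+ (z < 0)%R * m%:Z); split => //.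
  rewrite -prime_coprime // abszM abszX /= exp1n mul1n //.
have sg0 : (-1) ^+ (z < 0)%R != 0 :> rat by rewrite signr_eq0.
have mR0 : m%:R != 0 :> rat by rewrite pnatr_eq0.
have pk0 : (p ^ k)%:R != 0 :> rat by rewrite pnatr_eq0 expn_eq0 negb_and; case: eqP pp => // ->.
have ey2 : y = (p ^ (e + k)%N)%:R * t / D.
  by rewrite -ey mulrC mulKf.
rewrite ey2 eD ez rmorphM /= rmorph_sign -pmulrn expnD natrM.
by field; rewrite sg0 mR0 pk0 s0.
Qed.

End Res.

Definition sat (a : seq rat) (s : int -> rat) : Prop :=
  forall n : int, s (n + (size a)%:Z) = \sum_(i < size a) a`_i * s (n + (i : nat)%:Z).

Lemma sat_zero a s : a`_0 != 0 -> sat a s ->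
  (forall i : nat, (i < size a)%N -> s i%:Z = 0) -> forall n, s n = 0.
Proof.
move=> a0 hs h0.
have sz : (0 < size a)%N.
  by case: a a0 {hs h0} => // /eqP.
have key : forall k : nat, forall i : nat, (i < size a)%N ->
    s (k%:Z + i%:Z) = 0 /\ s (- k%:Z + i%:Z) = 0.
  elim=> [|k ih] i hi.
    by rewrite oppr0 add0r h0.
  split.
    case: (ltnP i.+1 (size a)) => hi1.
      have [E _] := ih _ hi1; rewrite -E; congr (s _); lia.
    have ei : i = (size a).-1 by lia.
    have := hs k%:Z.
    under eq_bigr => j _ do rewrite (proj1 (ih _ (ltn_ord j))) mulr0.
    rewrite big1 // => E; rewrite -E; congr (s _); rewrite -[size a](@prednK _ sz) ei -!PoszD; congr Posz; lia.
  case: i hi => [|i] hi.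
    have := hs (- k.+1%:Z).
    case: (size a) sz h0 hs a0 ih => // d' _ _ _ a0 ih.
    rewrite big_ord_recl /=.
    have -> : s (- k.+1%:Z + d'.+1%:Z) = 0.
      rewrite -(proj2 (ih d' (ltnSn _))); congr (s _); lia.
    rewrite big1 ?addr0; last first.
      move=> j _; have [_ E] := ih j (ltnW (ltn_ord j)).
      rewrite (_ : - k.+1%:Z + (lift ord0 j : nat)%:Z = - k%:Z + j%:Z) ?E ?mulr0 //.
      rewrite lift0; lia.
    move=> /esym /eqP; rewrite mulf_eq0 (negbTE a0) /= => /eqP E.
    rewrite -E; congr (s _); lia.
  have [_ E] := ih i (ltnW hi); rewrite -E; congr (s _); lia.
case=> k.
  have [E _] := key k 0%N sz; rewrite -E; congr (s _); lia.
have [_ E] := key k.+1 0%N sz; rewrite -E; congr (s _); rewrite NegzE; lia.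
Qed.

Lemma sat_lin a u m (c : 'I_m -> rat) (f : 'I_m -> int) : sat a u ->
  sat a (fun n => \sum_(i < m) c i * u (n + f i)).
Proof.
move=> hu n /=.
transitivity (\sum_(i < m) c i * \sum_(j < size a) a`_j * u ((n + f i) + (j : nat)%:Z)).
  by apply: eq_bigr => i _; rewrite -hu addrAC.
under eq_bigr => i _ do rewrite mulr_sumr.
rewrite exchange_big /=; apply: eq_bigr => j _; rewrite mulr_sumr.
by apply: eq_bigr => i _; rewrite mulrCA addrAC.
Qed.

Lemma sat_sub a s t : sat a s -> sat a t -> sat a (fun n => s n - t n).
Proof.
move=> hs ht n /=; rewrite hs ht -sumrB; apply: eq_bigr => i _; by rewrite mulrBr.
Qed.

Lemma sat_scale a s (c : rat) : sat a s -> sat a (fun n => c * s n).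
Proof.
move=> hs n /=; rewrite hs mulr_sumr; apply: eq_bigr => i _; by rewrite mulrCA.
Qed.

Lemma sat_shift a s (c : int) : sat a s -> sat a (fun n => s (n + c)).
Proof.
move=> hs n /=; rewrite addrAC hs; apply: eq_bigr => i _; by rewrite addrAC.
Qed.

Lemma trim d (c : nat -> rat) (u : int -> rat) :
  (exists i, (i < d)%N && (c i != 0)) ->
  (forall n : int, \sum_(i < d) c i * u (n + (i : nat)%:Z) = 0) ->
  (exists n, u n = 0) \/ exists a', is_rec u a' /\ (size a' < d)%N.
Proof.
move=> ex h.
have ub : forall i, (i < d)%N && (c i != 0) -> (i <= d)%N.
  by move=> i /andP[hi _]; apply: ltnW.
case: (ex_minnP ex) => j0 /andP[j0d cj0] minj.
case: (ex_maxnP ex ub) => j1 /andP[j1d cj1] maxj.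
have j01 : (j0 <= j1)%N by apply: minj; rewrite j1d cj1.
have zo : forall i, (i < d)%N -> ((i < j0)%N || (j1 < i)%N) -> c i = 0.
  move=> i id hi; apply/eqP; apply: contraTT hi => ci.
  have Pi : (i < d)%N && (c i != 0) by rewrite id ci.
  by rewrite negb_or -!leqNgt (minj _ Pi) (maxj _ Pi).
have hs : forall n : int, \sum_(j0 <= i < j1.+1) c i * u (n + i%:Z) = 0.
  move=> n; rewrite -[RHS](h n) -(big_mkord xpredT (fun i => c i * u (n + i%:Z))).
  rewrite (@big_cat_nat _ _ _ j0 0 d) //=; last by lia.
  rewrite (@big_cat_nat _ _ _ j1.+1 j0 d) //=; try lia.
  have -> : \sum_(0 <= i < j0) c i * u (n + i%:Z) = 0.
    rewrite big_nat_cond big1 // => i; rewrite andbT => /andP[_ hi].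
    by rewrite zo ?mul0r ?hi //; lia.
  have -> : \sum_(j1.+1 <= i < d) c i * u (n + i%:Z) = 0.
    rewrite big_nat_cond big1 // => i; rewrite andbT => /andP[hi hi'].
    by rewrite zo ?mul0r ?hi ?orbT.
  by rewrite add0r addr0.
case: (ltngtP j0 j1) j01 => // [lt01 _ | eq01 _]; last first.
  left; exists (0 + j0%:Z); have := hs 0.
  rewrite -eq01 big_nat1 => /eqP; rewrite mulf_eq0 (negbTE cj0) /=; by move/eqP.
right; exists (mkseq (fun i => - c (i + j0)%N / c j1) (j1 - j0)); split; last first.
  by rewrite size_mkseq; lia.
split.
  rewrite nth_mkseq; last by lia.
  by rewrite add0n mulNr oppr_eq0 mulf_neq0 // invr_eq0.
move=> n; rewrite size_mkseq.
have := hs (n - j0%:Z); rewrite big_nat_recr /=; last exact: ltnW.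
have -> : \sum_(j0 <= i < j1) c i * u (n - j0%:Z + i%:Z) =
    \sum_(i < j1 - j0) c (i + j0)%N * u (n - j0%:Z + (i + j0)%N%:Z).
  by rewrite -{1}(add0n j0) big_addn big_mkord.
move=> E.
have E2 : c j1 * u (n + (j1 - j0)%N%:Z) =
    - \sum_(i < j1 - j0) c (i + j0)%N * u (n + (i : nat)%:Z).
  apply/eqP; rewrite -addr_eq0; apply/eqP; rewrite -[RHS]E addrC.
  congr (_ + _); first by congr (_ * u _); lia.
  by apply: eq_bigr => i _; congr (_ * u _); lia.
under eq_bigr => i _ do rewrite nth_mkseq //.
transitivity (- (c j1)^-1 * \sum_(i < j1 - j0) c (i + j0)%N * u (n + (i : nat)%:Z)).
  by rewrite mulNr -mulrN -E2 mulKf.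
rewrite mulr_sumr; apply: eq_bigr => i _; by rewrite mulrA [X in X * _ = _]mulrC mulNr mulrN.
Qed.

Lemma min_rec u : LRBS u ->
  exists a, is_rec u a /\ forall a', is_rec u a' -> (size a <= size a')%N.
Proof.
case=> a ha.
have : forall N a, (size a < N)%N -> is_rec u a ->
   exists a0, is_rec u a0 /\ forall a', is_rec u a' -> (size a0 <= size a')%N.
  elim=> [|N ih] b lt hb; first by [].
  case: (classic (exists a', is_rec u a' /\ (size a' < size b)%N)) => [[a' [h1 h2]]|hn].
    apply: (ih a') => //; lia.
  exists b; split=> // a' h; rewrite leqNgt; apply/negP => lt'; apply: hn; by exists a'.
by move/(_ (size a).+1 a (ltnSn _) ha).
Qed.

Definition hankel (u : int -> rat) d : 'M[rat]_d := \matrix_(i < d, j < d) u (i%:Z + j%:Z).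

Lemma hankel_det u a : is_rec u a -> (forall a', is_rec u a' -> (size a <= size a')%N) ->
  (forall n, u n != 0) -> \det (hankel u (size a)) != 0.
Proof.
move=> [a0 ha] amin unz; apply/negP => /det0P [v v0 hv].
pose c (k : nat) := oapp (v 0) 0 (insub k : option 'I_(size a)).
have cv : forall i : 'I_(size a), c i = v 0 i by move=> i; rewrite /c valK.
have ex : exists i, (i < size a)%N && (c i != 0).
  apply: NNPP => hne; apply: (negP v0); apply/eqP/matrixP => i j.
  rewrite mxE; case: (eqVneq (v i j) 0) => // hij; exfalso; apply: hne.
  by exists j; rewrite ltn_ord cv; move: hij; rewrite (ord1 i).
have hs : forall n, \sum_(i < size a) v 0 i * u (n + (i : nat)%:Z) = 0.
  apply: (sat_zero a0 (sat_lin (fun i : 'I_(size a) => v 0 i) (fun i => (i : nat)%:Z) ha)).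
  move=> j hj.
  have := congr1 (fun M : 'M[rat]_(1, size a) => M 0 (Ordinal hj)) hv; rewrite !mxE => E; rewrite -[RHS]E.
  by apply: eq_bigr => i _; rewrite !mxE addrC.
case: (trim ex (u := u)).
- move=> n; rewrite -[RHS](hs n); apply: eq_bigr => i _; by rewrite cv.
- by case=> n /eqP; rewrite (negbTE (unz n)).
- case=> a' [h1 h2]; have := amin _ h1; lia.
Qed.

Lemma pint_Zb p b x : prime p -> ~~ (p %| `|b|)%N -> in_Zb b x -> pint p x.
Proof.
move=> pp pb [m [k ->]]; exists m, (b ^+ k); split; last by rewrite rmorphXn.
by rewrite abszX Euclid_dvdX // negb_and pb.
Qed.


Lemma periodic b u p e : LRBS u -> values_in_Zb b u -> (forall n, u n != 0) ->
  prime p -> ~~ (p %| `|b|)%N ->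
  exists P : nat, (0 < P)%N /\ forall n, Mp p e (u (n + P%:Z) - u n).
Proof.
move=> hL hZ unz pp pb.
have pu : forall n, pint p (u n) := fun n => pint_Zb pp pb (hZ n).
case: (min_rec hL) => a [ha amin].
have hd := hankel_det ha amin unz.
case: ha => a0 ha.
have pH : forall i j, pint p (hankel u (size a) i j) by move=> i j; rewrite mxE; apply: pu.
have pD := pint_det pp pH.
case: (Mp_cancel pp pD hd) => k hk.
pose E := (e + k)%N.
pose Q (x : rat) (r : nat) := (r < p ^ E)%N /\ Mp p E (x - r%:R).
pose res (x : rat) : nat := epsilon (inhabits 0%N) (Q x).
have resQ : forall x, pint p x -> Q x (res x).
  by move=> x px; apply: epsilon_spec; apply: residue.
pose T := {ffun 'I_(size a) -> 'I_(p ^ E).+1}.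
pose f (n : 'I_#|T|.+1) : T :=
  [ffun jj : 'I_(size a) => inord (res (u ((n : nat)%:Z + (jj : nat)%:Z)))].
have ninj : ~ injective f.
  by move=> fi; have := leq_card f fi; rewrite card_ord ltnn.
have [i [j [fij ij]]] : exists i j, f i = f j /\ (i < j)%N.
  apply: NNPP => hne; apply: ninj => x y fxy.
  case: (ltngtP x y) => [lt|gt|eq]; last by apply: val_inj.
    by exfalso; apply: hne; exists x, y.
  by exfalso; apply: hne; exists y, x.
have key : forall jj : 'I_(size a),
    Mp p E (u ((j : nat)%:Z + (jj : nat)%:Z) - u ((i : nat)%:Z + (jj : nat)%:Z)).
  move=> jj; have := congr1 (fun g : T => (g jj : nat)) fij; rewrite /= !ffunE.
  have [li mi] := resQ _ (pu ((i : nat)%:Z + (jj : nat)%:Z)).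
  have [lj mj] := resQ _ (pu ((j : nat)%:Z + (jj : nat)%:Z)).
  rewrite !inordK; [|exact: ltnW|exact: ltnW] => er.
  have := MpB pp mj mi; rewrite -er.
  by rewrite opprB addrA subrK.
pose x := \row_(jj < size a) (u ((j : nat)%:Z + (jj : nat)%:Z) - u ((i : nat)%:Z + (jj : nat)%:Z)).
pose c := x *m \adj (hankel u (size a)).
have cMp : forall l, Mp p E (c 0 l).
  move=> l; rewrite mxE; apply: (Mp_sum pp) => kk _; rewrite mxE.
  apply: (MpM pp); [exact: key | exact: (pint_adj pp)].
have cH : c *m hankel u (size a) = \det (hankel u (size a)) *: x.
  by rewrite -mulmxA mul_adj_mx mul_mx_scalar.
pose s1 n := \sum_(l < size a) c 0 l * u (n + (l : nat)%:Z).
pose s2 n := \det (hankel u (size a)) * (u (n + (j : nat)%:Z) - u (n + (i : nat)%:Z)).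
have ss : sat a (fun n => s1 n - s2 n).
  apply: sat_sub; first exact: (sat_lin _ (fun l : 'I_(size a) => (l : nat)%:Z) ha).
  apply: sat_scale; apply: sat_sub; exact: sat_shift.
have s0 : forall l : nat, (l < size a)%N -> s1 l%:Z - s2 l%:Z = 0.
  move=> l hl; apply/eqP; rewrite subr_eq0; apply/eqP.
  have := congr1 (fun M : 'M[rat]_(1, size a) => M 0 (Ordinal hl)) cH; rewrite !mxE /=.
  move=> E1; rewrite /s1 /s2 (addrC l%:Z j) (addrC l%:Z i) -E1.
  by apply: eq_bigr => l' _; rewrite !mxE addrC.
have sz := sat_zero a0 ss s0.
exists (j - i)%N; split; first lia.
move=> n; apply: hk.
have := sz (n - (i : nat)%:Z); move/eqP; rewrite subr_eq0 => /eqP E2.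
have -> : u (n + (j - i)%N%:Z) - u n =
   u (n - (i : nat)%:Z + (j : nat)%:Z) - u (n - (i : nat)%:Z + (i : nat)%:Z).
  by congr (u _ - u _); lia.
have Ms : Mp p E (s1 (n - (i : nat)%:Z)).
  by apply: (Mp_sum pp) => l _; apply: (MpM pp) => //; exact: pu.
by move: Ms; rewrite E2.
Qed.

Fixpoint seqrec (f : int -> nat -> int) (r : nat) : int :=
  match r with 0%N => 0 | r'.+1 => f (seqrec f r') r' end.

Lemma vp_mono p s S x : (s <= S)%N -> vp_ge p S x -> vp_ge p s x.
Proof.
move=> le h; apply: dvdz_trans h; rewrite dvdzE /=; exact: dvdn_exp2l.
Qed.

Lemma compact p w : prime p -> ~ has_padic_zero p w ->
  exists r, forall n, ~ vp_ge p r (w n).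
Proof.
move=> pp hn; apply: NNPP => hall.
have H : forall r, exists n, vp_ge p r (w n).
  move=> r; apply: NNPP => h; apply: hall; exists r => n hv; apply: h; by exists n.
pose G (c : int) (r : nat) := forall s, exists n, vp_ge p s (w n) /\ ((p ^ r)%:Z %| n - c)%Z.
have p0 : (0 < p)%N by apply: prime_gt0.
have step : forall c r, G c r -> exists c', G c' r.+1 /\ ((p ^ r)%:Z %| c' - c)%Z.
  move=> c r hG; apply: NNPP => hne.
  have hj : forall j : nat, (j < p)%N -> exists s, forall n, vp_ge p s (w n) ->
      ~ ((p ^ r.+1)%:Z %| n - (c + (j * p ^ r)%N%:Z))%Z.
    move=> j jp; apply: NNPP => h1; apply: hne; exists (c + (j * p ^ r)%N%:Z); split.
      move=> s; apply: NNPP => h2; apply: h1; exists s => n hv hd; apply: h2; by exists n.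
    by rewrite addrAC subrr add0r dvdzE /= dvdn_mull.
  have hJ : forall J, (J <= p)%N -> exists S, forall j, (j < J)%N -> forall n,
      vp_ge p S (w n) -> ~ ((p ^ r.+1)%:Z %| n - (c + (j * p ^ r)%N%:Z))%Z.
    elim=> [|J ih] hJ; first by exists 0%N.
    case: (ih (ltnW hJ)) => S hS; case: (hj J hJ) => s hs.
    exists (maxn S s) => j jJ n hv.
    case: (ltnP j J) => jJ'.
      by apply: hS => //; apply: vp_mono hv; apply: leq_maxl.
    have -> : j = J by lia.
    by apply: hs; apply: vp_mono hv; apply: leq_maxr.
  case: (hJ p (leqnn p)) => S hS.
  case: (hG S) => n [hv hd].
  case/dvdzP: hd => t et.
  have pz : (p%:Z != 0) by rewrite eqz_nat; lia.
  pose j := `|(t %% p%:Z)%Z|%N.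
  have tge : 0 <= (t %% p%:Z)%Z by apply: modz_ge0.
  have ej : (j%:Z = (t %% p%:Z)%Z) by rewrite /j gez0_abs.
  have jp : (j < p)%N by rewrite -ltz_nat ej ltz_pmod // ltz_nat.
  apply: (hS j jp n hv).
  have htp := divz_eq t p%:Z.
  apply/dvdzP; exists (t %/ p%:Z)%Z.
  rewrite PoszM ej opprD addrA et {1}htp expnS PoszM.
  rewrite -PoszM. rewrite PoszM. ring.
pose next c r := epsilon (inhabits 0) (fun c' => G c' r.+1 /\ ((p ^ r)%:Z %| c' - c)%Z).
pose cs := seqrec next.
have Gcs : forall r, G (cs r) r /\ ((p ^ r)%:Z %| cs r.+1 - cs r)%Z.
  have G0 : G (cs 0%N) 0%N.
    move=> s; case: (H s) => n hv; exists n; split => //; by rewrite expn0 dvd1z.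
  suff : forall r, G (cs r) r.
    move=> hr r; split => //.
    have := epsilon_spec (inhabits 0) (fun c' => G c' r.+1 /\ ((p ^ r)%:Z %| c' - cs r)%Z) (step _ _ (hr r)).
    by case.
  elim=> // r ih.
  have := epsilon_spec (inhabits 0) (fun c' => G c' r.+1 /\ ((p ^ r)%:Z %| c' - cs r)%Z) (step _ _ ih).
  by case.
pose nn r := epsilon (inhabits 0) (fun n => vp_ge p r (w n) /\ ((p ^ r)%:Z %| n - cs r)%Z).
apply: hn; exists cs; split; first by move=> r; case: (Gcs r).
exists nn => r _.
apply: (epsilon_spec (inhabits 0) (fun n => vp_ge p r (w n) /\ ((p ^ r)%:Z %| n - cs r)%Z)).
by case: (Gcs r) => hr _; apply: hr.
Qed.

Lemma periodic_mult p e u (P : nat) : prime p ->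
  (forall n, Mp p e (u (n + P%:Z) - u n)) ->
  forall (t : int) n, Mp p e (u (n + t * P%:Z) - u n).
Proof.
move=> pp hP.
have hn : forall (t : nat) n, Mp p e (u (n + t%:Z * P%:Z) - u n).
  elim=> [|t ih] n; first by rewrite mul0r addr0 subrr; exact: Mp0.
  have -> : u (n + t.+1%:Z * P%:Z) - u n =
      (u ((n + t%:Z * P%:Z) + P%:Z) - u (n + t%:Z * P%:Z)) + (u (n + t%:Z * P%:Z) - u n).
    by rewrite (_ : n + t.+1%:Z * P%:Z = n + t%:Z * P%:Z + P%:Z) ?subrKA //; lia.
  exact: MpD.
case=> t n; first exact: hn.
have := hn t.+1 (n + Negz t * P%:Z).
rewrite (_ : n + Negz t * P%:Z + t.+1%:Z * P%:Z = n); last by rewrite NegzE; lia.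
by move/(MpN pp); rewrite opprB.
Qed.

Lemma denq_dvd x (z s : int) : s != 0 -> x = z%:~R / s%:~R -> (`|denq x| %| `|s|)%N.
Proof.
move=> s0' ex.
have s0 : s%:~R != 0 :> rat by rewrite intr_eq0.
have e1 : numq x * s = z * denq x.
  apply: (@intr_inj rat); rewrite !rmorphM /= numqE ex.
  have := denq_neq0 x; rewrite -(intr_eq0 rat) => d0.
  by field.
have : (`|denq x| %| `|numq x| * `|s|)%N.
  by rewrite -abszM e1 abszM dvdn_mull.
by rewrite Gauss_dvdr // coprime_sym coprime_num_den.
Qed.

Lemma zero_mod_of b m x : b != 0 -> in_Zb b x -> coprime `|b| m ->
  (m %| `|numq x|)%N -> zero_mod_Zb b m x.
Proof.
move=> b0 [z [k ex]] cbm hm.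
have bk0 : b ^+ k != 0 by rewrite expf_neq0.
have ex' : x = z%:~R / (b ^+ k)%:~R by rewrite rmorphXn.
have hd := denq_dvd bk0 ex'.
have e1 : numq x * b ^+ k = z * denq x.
  apply: (@intr_inj rat); rewrite !rmorphM /= numqE ex rmorphXn /=.
  have := denq_neq0 x; rewrite -(intr_eq0 rat) => d0.
  have : (b%:~R ^+ k) != 0 :> rat by rewrite expf_neq0 // intr_eq0.
  move=> bk; by field.
have cmd : coprime m `|denq x|.
  apply: (coprime_dvdr hd); rewrite abszX coprimeXr // coprime_sym //.
have mz : (m %| `|z|)%N.
  have : (m %| `|z| * `|denq x|)%N.
    by rewrite -abszM -e1 abszM dvdn_mulr.
  by rewrite Gauss_dvdl.
have : (m%:Z %| z)%Z by rewrite dvdzE.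
case/dvdzP => q eq.
exists (q%:~R / b%:~R ^+ k); split; first by exists q, k.
rewrite ex eq rmorphM /= mulrA; congr (_ / _).
by rewrite mulrC -pmulrn.
Qed.

Lemma Mp_of_zero_mod p b m x r : prime p -> ~~ (p %| `|b|)%N ->
  (p ^ r %| m)%N -> zero_mod_Zb b m x -> Mp p r x.
Proof.
move=> pp pb /dvdnP [m' em] [y [hy ->]].
exists (m'%:R * y); split.
  by apply: (pintM pp); [exact: (pint_nat pp) | exact: (pint_Zb pp pb)].
by rewrite em natrM mulrA [_%:R * m'%:R]mulrC.
Qed.

Lemma coprime_prod (I : Type) (r : seq I) (P : pred I) (F : I -> nat) (n : nat) :
  (forall i, P i -> coprime n (F i)) -> coprime n (\prod_(i <- r | P i) F i).
Proof.
move=> h; apply: (big_ind (coprime n)) => //; first by rewrite /coprime gcdn1.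
by move=> x y hx hy; rewrite coprimeMr hx hy.
Qed.

Lemma div_decomp (n : int) (N : nat) : (0 < N)%N ->
  exists (q : int) (l : nat), (l < N)%N /\ n = N%:Z * q + l%:Z.
Proof.
move=> N0; have Nz : N%:Z != 0 by rewrite eqz_nat -lt0n.
have ge := modz_ge0 n Nz.
exists (n %/ N%:Z)%Z, `|(n %% N%:Z)%Z|%N; split.
  by rewrite -ltz_nat gez0_abs // ltz_pmod // ltz_nat.
by rewrite gez0_abs // mulrC -divz_eq.
Qed.

Lemma obs_nozero b u : (exists (N : nat) (ps : seq nat), (1 <= N)%N /\
       (forall p, p \in ps -> prime p /\ coprime p `|b|%N) /\
       forall l : nat, (l < N)%N ->
         exists2 p, p \in ps &
           ~ has_padic_zero p (fun n : int => u (N%:Z * n + l%:Z))) ->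
  ~ has_integer_zero u.
Proof.
case=> N [ps [N1 [hps hl]]] [n un0].
case: (div_decomp n N1) => q [l [lN en]].
case: (hl l lN) => p pin hp; apply: hp.
exists (fun _ => q); split; first by move=> r; rewrite subrr dvdz0.
exists (fun _ => q) => r _; split; last by rewrite subrr dvdz0.
by rewrite /vp_ge /= -en un0; apply: dvdz0.
Qed.

Lemma SkA : Skolem_Conjecture -> S'.
Proof.
move=> Sk b u b0 hL hS hZ; have [Sk1 Sk2] := Sk b u b0 hL hS hZ; split; last first.
  exact: obs_nozero.
move=> nz; case: (Sk1 nz) => m [m2 [cbm hm]].
have unz : forall n, u n != 0 by move=> n; apply/eqP => h; apply: nz; exists n.
have pprop : forall p, p \in primes m -> prime p /\ ~~ (p %| `|b|)%N.
  move=> p; rewrite mem_primes => /and3P[pp _ pm]; split => //.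
  rewrite -prime_coprime //; apply: (coprime_dvdl pm); by rewrite coprime_sym.
pose PP p P := (0 < P)%N /\ forall n, Mp p (logn p m) (u (n + P%:Z) - u n).
pose Pf p := epsilon (inhabits 0%N) (PP p).
have PfP : forall p, p \in primes m -> PP p (Pf p).
  move=> p pin; apply: epsilon_spec; have [pp pb] := pprop p pin.
  exact: (periodic (logn p m) hL hZ unz pp pb).
pose N := \prod_(p <- primes m) Pf p.
exists N, (primes m); split.
  rewrite /N big_seq; apply: (big_ind (fun x => 0 < x)%N) => //.
    by move=> x y hx hy; rewrite muln_gt0 hx hy.
  by move=> p pin; case: (PfP p pin).
split.
  move=> p pin; have [pp pb] := pprop p pin; split => //; by rewrite prime_coprime.
move=> l lN.
have : exists2 p, p \in primes m & ~ ((p ^ logn p m)%:Z %| numq (u l%:Z))%Z.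
  apply: NNPP => hne; apply: (hm l%:Z); apply: zero_mod_of => //.
  apply/dvdn_partP => [| p pin]; first by lia.
  rewrite p_part; apply: NNPP => hd; apply: hne; exists p => //.
case=> p pin hnd; exists p => //.
move=> [c [_ [n_ h]]].
have [pp pb] := pprop p pin.
have e0 : (0 < logn p m)%N by rewrite logn_gt0.
have [h1 _] := h _ e0.
set q := n_ (logn p m) in h1.
apply: hnd.
have Mq := numq_Mp (pint_Zb pp pb (hZ _)) h1.
have [Ppos Pper] := PfP p pin.
have dP : (Pf p %| N)%N.
  by rewrite /N (bigD1_seq p pin (primes_uniq m)) /= dvdn_mulr.
case/dvdnP: dP => N' eN.
have := periodic_mult pp Pper (q * N'%:Z) l%:Z.
rewrite (_ : l%:Z + q * N'%:Z * (Pf p)%:Z = N%:Z * q + l%:Z); last first.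
  by rewrite eN PoszM; ring.
move=> Md; have := MpB pp Mq Md; rewrite opprB addrC subrK.
exact: Mp_numq.
Qed.

Lemma SkB : S' -> Skolem_Conjecture.
Proof.
move=> S b u b0 hL hS hZ; have [S1 S2] := S b u b0 hL hS hZ; split; last first.
  case=> m [m2 [cbm hm]] [n un0]; apply: (hm n); exists 0; split.
    by exists 0, 0%N; rewrite mul0r.
  by rewrite un0 mulr0.
move=> nz; case: (S1 nz) => N [ps [N1 [hps hl]]].
pose spec (l : nat) (pr : nat * nat) := (l < N)%N ->
  [/\ pr.1 \in ps, (0 < pr.2)%N & forall n, ~ vp_ge pr.1 pr.2 (u (N%:Z * n + l%:Z))].
have obs : forall l, exists pr, spec l pr.
  move=> l; case: (ltnP l N) => lN; last by exists (0, 0)%N => h; lia.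
  case: (hl l lN) => p pin hp; have [pp _] := hps p pin.
  case: (compact pp hp) => r hr; exists (p, r) => _; split => //.
  case: r hr => // hr; exfalso; apply: (hr 0); by rewrite /vp_ge expn0 dvd1z.
pose pr l := epsilon (inhabits (0, 0)%N) (spec l).
have prP : forall l, (l < N)%N -> spec l (pr l) /\ True.
  by move=> l lN; split => //; apply: epsilon_spec.
pose F (i : 'I_N) := ((pr i).1 ^ (pr i).2)%N.
pose m := \prod_(i < N) F i.
have Fpos : forall i, (0 < F i)%N.
  move=> i; have [hp _] := prP i (ltn_ord i); have [pin _ _] := hp (ltn_ord i).
  have [pp _] := hps _ pin; by rewrite expn_gt0 prime_gt0.
have mpos : (0 < m)%N.
  apply: (big_ind (fun x => 0 < x)%N) => //.
  by move=> x y hx hy; rewrite muln_gt0 hx hy.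
have Fdvd : forall i, (F i %| m)%N.
  by move=> i; rewrite /m (bigD1 i) //= dvdn_mulr.
exists m; split.
  pose i0 := Ordinal N1.
  have [hp _] := prP i0 (ltn_ord i0); have [pin r0 _] := hp (ltn_ord i0).
  have [pp _] := hps _ pin.
  apply: (leq_trans _ (dvdn_leq mpos (Fdvd i0))).
  rewrite /F; apply: (leq_trans (prime_gt1 pp)).
  by rewrite -{1}(expn1 (pr i0).1) leq_pexp2l // prime_gt0.
split.
  apply: coprime_prod => i _.
  have [hp _] := prP i (ltn_ord i); have [pin _ _] := hp (ltn_ord i).
  have [_ cp] := hps _ pin; by rewrite coprimeXr // coprime_sym.
move=> n hz.
case: (div_decomp n N1) => q [l [lN en]].
have [hp _] := prP l lN; have [pin _ hno] := hp lN.
have [pp cp] := hps _ pin.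
apply: (hno q); rewrite -en.
apply: (Mp_numq pp).
apply: (Mp_of_zero_mod pp _ _ hz); first by rewrite -prime_coprime.
exact: (Fdvd (Ordinal lN)).
Qed.

Theorem mainTheorem6 : Skolem_Conjecture <-> S'.
Proof. split; [exact: SkA | exact: SkB]. Qed.
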